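(* The complement of $\mathcal S_1\cup\mathcal S_2$ in the invariant torsion variety $\mathcal M\cong\mathbb{RP}^1\times\mathbb{RP}^2$ contains exactly two components $\mathcal M_\pm$. The isomorphism classes of the Lie algebras $\mathfrak g_{\mathbf x,\mathbf y}$ corresponding to points of $\mathcal M$ are as follows: (1) points of $\mathcal M_+$ correspond to the semi-simple Lie algebra $\mathfrak{so}(3)\oplus\mathfrak{so}(3)$; (2) points of $\mathcal M_-$ correspond to the semi-simple Lie algebra $\mathfrak{so}(3,\mathbb C)$; (3) points of $\mathcal S_1\setminus \mathcal C$ correspond to the semi-direct product $\mathfrak{so}(3)\ltimes\mathbb R^3$; (4) points of $\mathcal S_2\setminus \mathcal C$ correspond to the direct sum $\mathfrak{so}(3)\oplus\mathbb R^3$; (5) points of $\mathcal C = \mathcal S_1\cap \mathcal S_2$ correspond to the nilpotent Lie algebra $(0,0,0,12,13,23)$ (i.e. with a basis satisfying $df^1=df^2=df^3=0$, $df^4=f^{12}$, $df^5=f^{13}$, $df^6=f^{23}$).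
   Context: Represent a point of $\mathcal M\cong\mathbb{RP}^1\times\mathbb{RP}^2$ by a pair of nonzero polynomials $\mathbf x=x_1u_1+x_2u_2$, $\mathbf y=y_1u_1^2+y_2u_1u_2+y_3u_2^2$ (up to independent scaling). To it corresponds the Lie algebra $\mathfrak g_{\mathbf x,\mathbf y}$ with a basis $e^1,\dots,e^6$ of its dual satisfying ($e^{ij}=e^i\wedge e^j$): $de^1=(x_2y_1-x_1y_2)e^{35}-x_1y_3(e^{36}+e^{45})-x_2y_3e^{46}$, $de^3=-(x_2y_1-x_1y_2)e^{15}+x_1y_3(e^{16}+e^{25})+x_2y_3e^{26}$, $de^5=(x_2y_1-x_1y_2)e^{13}-x_1y_3(e^{14}+e^{23})-x_2y_3e^{24}$, $de^2=x_1y_1e^{35}-(x_1y_3-y_2x_2)e^{46}+x_2y_1(e^{36}+e^{45})$, $de^4=-x_1y_1e^{15}+(x_1y_3-y_2x_2)e^{26}-x_2y_1(e^{16}+e^{25})$, $de^6=x_1y_1e^{13}-(x_1y_3-y_2x_2)e^{24}+x_2y_1(e^{14}+e^{23})$ (these are exactly the left-invariant $SO(3)$-structures with invariant intrinsic torsion whose flat connection has invariant torsion, up to scale). Let $\Delta(\mathbf y)=y_2^2-4y_1y_3$ and $R(\mathbf x,\mathbf y)=x_2^2y_1+y_3x_1^2-y_2x_2x_1$ (discriminant and resultant). Define the subvarieties $\mathcal M_+=\{\Delta>0,R\neq0\}$, $\mathcal M_-=\{\Delta<0,R\neq0\}$, $\mathcal S_1=\{\Delta=0\}$, $\mathcal S_2=\{R=0\}$,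 $\mathcal C=\mathcal S_1\cap\mathcal S_2$ (the locus where $\mathbf y$ is a multiple of $\mathbf x^2$). *)

(* Defs.v *)
From HB Require Import structures.
From mathcomp Require Import all_boot all_order all_algebra.
From mathcomp Require Import all_classical all_reals topology normedtype.
Set Implicit Arguments. Unset Strict Implicit. Unset Printing Implicit Defensive.
Import Order.TTheory GRing.Theory Num.Theory.
Import numFieldNormedType.Exports.
Local Open Scope ring_scope.

(* A 6-dimensional real Lie algebra is given through the exterior differential
   of a dual basis e^1..e^6 (indices 0..5 here):
     D k i j = coefficient of e^{ij} (i < j) in d e^k.
   With the convention d e^k (X,Y) = - e^k([X,Y]), the structure constants are
   [e_i, e_j] = sum_k sc D i j k e_k below. *)
Definition dform (R : realType) := 'I_6 -> 'I_6 -> 'I_6 -> R.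

Definition sc (R : realType) (D : dform R) (i j k : 'I_6) : R :=
  if (i < j)%N then - D k i j else if (j < i)%N then D k j i else 0.

Definition lbr (R : realType) (D : dform R) (u v : 'rV[R]_6) : 'rV[R]_6 :=
  \row_k \sum_(i < 6) \sum_(j < 6) u 0 i * v 0 j * sc D i j k.

Definition lie_iso (R : realType) (D1 D2 : dform R) : Prop :=
  exists A : 'M[R]_6, A \in unitmx /\
    forall u v : 'rV[R]_6, lbr D1 u v *m A = lbr D2 (u *m A) (v *m A).

Definition gxy (R : realType) (x1 x2 y1 y2 y3 : R) : dform R :=
  fun k i j =>
  let a := x2 * y1 - x1 * y2 in let b := x1 * y3 in let c := x2 * y3 in
  let p := x1 * y1 in let q := x1 * y3 - y2 * x2 in let r := x2 * y1 in
  match nat_of_ord k, nat_of_ord i, nat_of_ord j with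
  | 0, 2, 4 => a | 0, 2, 5 => - b | 0, 3, 4 => - b | 0, 3, 5 => - c
  | 2, 0, 4 => - a | 2, 0, 5 => b | 2, 1, 4 => b | 2, 1, 5 => c
  | 4, 0, 2 => a | 4, 0, 3 => - b | 4, 1, 2 => - b | 4, 1, 3 => - c
  | 1, 2, 4 => p | 1, 3, 5 => - q | 1, 2, 5 => r | 1, 3, 4 => r
  | 3, 0, 4 => - p | 3, 1, 5 => q | 3, 0, 5 => - r | 3, 1, 4 => - r
  | 5, 0, 2 => p | 5, 1, 3 => - q | 5, 0, 3 => r | 5, 1, 2 => r
  | _, _, _ => 0
  end.

Definition so3_so3 (R : realType) : dform R := fun k i j =>
  match nat_of_ord k, nat_of_ord i, nat_of_ord j with
  | 0, 1, 2 => 1 | 1, 0, 2 => -1 | 2, 0, 1 => 1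
  | 3, 4, 5 => 1 | 4, 3, 5 => -1 | 5, 3, 4 => 1
  | _, _, _ => 0 end.

(* so(3,C) as a real Lie algebra (Maurer-Cartan dz^1 = z^2 z^3 etc. with
   z^k = e^k + i e^{k+3}):
   de^1 = e23 - e56, de^2 = -e13 + e46, de^3 = e12 - e45,
   de^4 = e26 - e35, de^5 = -e16 + e34, de^6 = e15 - e24 *)
Definition so3C (R : realType) : dform R := fun k i j =>
  match nat_of_ord k, nat_of_ord i, nat_of_ord j with
  | 0, 1, 2 => 1 | 0, 4, 5 => -1
  | 1, 0, 2 => -1 | 1, 3, 5 => 1
  | 2, 0, 1 => 1 | 2, 3, 4 => -1
  | 3, 1, 5 => 1 | 3, 2, 4 => -1
  | 4, 0, 5 => -1 | 4, 2, 3 => 1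
  | 5, 0, 4 => 1 | 5, 1, 3 => -1
  | _, _, _ => 0 end.

Definition so3_ltimes_R3 (R : realType) : dform R := fun k i j =>
  match nat_of_ord k, nat_of_ord i, nat_of_ord j with
  | 0, 1, 2 => 1 | 1, 0, 2 => -1 | 2, 0, 1 => 1
  | 3, 1, 5 => 1 | 3, 2, 4 => -1
  | 4, 0, 5 => -1 | 4, 2, 3 => 1
  | 5, 0, 4 => 1 | 5, 1, 3 => -1
  | _, _, _ => 0 end.

Definition so3_oplus_R3 (R : realType) : dform R := fun k i j =>
  match nat_of_ord k, nat_of_ord i, nat_of_ord j with
  | 0, 1, 2 => 1 | 1, 0, 2 => -1 | 2, 0, 1 => 1
  | _, _, _ => 0 end.

Definition nil_alg (R : realType) : dform R := fun k i j =>
  match nat_of_ord k, nat_of_ord i, nat_of_ord j with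
  | 3, 0, 1 => 1 | 4, 0, 2 => 1 | 5, 1, 2 => 1
  | _, _, _ => 0 end.

Definition Delta (R : realType) (y1 y2 y3 : R) : R := y2 ^+ 2 - 4 * y1 * y3.
Definition Res (R : realType) (x1 x2 y1 y2 y3 : R) : R :=
  x2 ^+ 2 * y1 + y3 * x1 ^+ 2 - y2 * x2 * x1.

(* A point of M = RP^1 x RP^2 is represented by (x1,x2,y1,y2,y3) with
   (x1,x2) <> 0 and (y1,y2,y3) <> 0; all the loci below are invariant
   under independent nonzero scalings of x and y. *)
Definition repM (R : realType) (x1 x2 y1 y2 y3 : R) : Prop :=
  (x1, x2) <> (0, 0) /\ (y1, y2, y3) <> (0, 0, 0).

Definition inMplus (R : realType) (x1 x2 y1 y2 y3 : R) : Prop :=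
  repM x1 x2 y1 y2 y3 /\ 0 < Delta y1 y2 y3 /\ Res x1 x2 y1 y2 y3 != 0.
Definition inMminus (R : realType) (x1 x2 y1 y2 y3 : R) : Prop :=
  repM x1 x2 y1 y2 y3 /\ Delta y1 y2 y3 < 0 /\ Res x1 x2 y1 y2 y3 != 0.
Definition inS1 (R : realType) (x1 x2 y1 y2 y3 : R) : Prop :=
  repM x1 x2 y1 y2 y3 /\ Delta y1 y2 y3 = 0.
Definition inS2 (R : realType) (x1 x2 y1 y2 y3 : R) : Prop :=
  repM x1 x2 y1 y2 y3 /\ Res x1 x2 y1 y2 y3 = 0.
Definition inC (R : realType) (x1 x2 y1 y2 y3 : R) : Prop :=
  inS1 x1 x2 y1 y2 y3 /\ inS2 x1 x2 y1 y2 y3.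
Definition inU (R : realType) (x1 x2 y1 y2 y3 : R) : Prop :=
  repM x1 x2 y1 y2 y3 /\ ~ inS1 x1 x2 y1 y2 y3 /\ ~ inS2 x1 x2 y1 y2 y3.

(* A path in M lying in a (scaling-invariant) set P, from [p] to [q]:
   by path lifting for the double covers S^n -> RP^n this is the same as a
   continuous path in the cover (R^2\0) x (R^3\0) staying in P on [0,1],
   starting at p and ending at (lambda q_x, mu q_y) with lambda, mu <> 0. *)
Definition path_in (R : realType) (P : R -> R -> R -> R -> R -> Prop)
  (p q : R * R * R * R * R) : Prop :=
  let: (p1, p2, p3, p4, p5) := p in
  let: (q1, q2, q3, q4, q5) := q in
  exists (g1 g2 g3 g4 g5 : R -> R) (lam mu : R),
    [/\ continuous g1, continuous g2, continuous g3, continuous g4 & continuous g5] /\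
    lam != 0 /\ mu != 0 /\
    [/\ g1 0 = p1, g2 0 = p2, g3 0 = p3, g4 0 = p4 & g5 0 = p5] /\
    [/\ g1 1 = lam * q1, g2 1 = lam * q2, g3 1 = mu * q3, g4 1 = mu * q4
      & g5 1 = mu * q5] /\
    (forall t : R, 0 <= t <= 1 -> P (g1 t) (g2 t) (g3 t) (g4 t) (g5 t)).

Definition in5 (R : realType) (P : R -> R -> R -> R -> R -> Prop)
  (p : R * R * R * R * R) : Prop :=
  let: (p1, p2, p3, p4, p5) := p in P p1 p2 p3 p4 p5.

(* "U has exactly the two connected components A and B":
   U is the disjoint union of A and B, A and B are nonempty and
   path-connected (within themselves), and no path in U joins A to B. *)
Definition two_components (R : realType) (U A B : R -> R -> R -> R -> R -> Prop) : Prop :=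
  (forall p, in5 U p <-> in5 A p \/ in5 B p) /\
  (forall p, ~ (in5 A p /\ in5 B p)) /\
  (exists p, in5 A p) /\ (exists p, in5 B p) /\
  (forall p q, in5 A p -> in5 A q -> path_in A p q) /\
  (forall p q, in5 B p -> in5 B q -> path_in B p q) /\
  (forall p q, in5 A p -> in5 B q -> ~ path_in U p q).

(* Main.v *)
Require Import Defs.
From HB Require Import structures.
From mathcomp Require Import all_boot all_order all_algebra.
From mathcomp Require Import all_classical all_reals topology normedtype.
From mathcomp Require Import ring lra.
Import Order.TTheory GRing.Theory Num.Theory.
Local Open Scope ring_scope.

Section S.
Variable R : realType.
Implicit Types D : dform R.

Lemma lbrE D u v k : lbr D u v 0 k = \sum_(i < 6) \sum_(j < 6) u 0 i * v 0 j * sc D i j k.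
Proof. by rewrite mxE. Qed.

Lemma lbr_sumL D (a : 'I_6 -> R) (x : 'I_6 -> 'rV[R]_6) v :
  lbr D (\sum_i a i *: x i) v = \sum_i a i *: lbr D (x i) v.
Proof.
apply/rowP => k; rewrite lbrE.
transitivity (\sum_(i < 6) \sum_(j < 6) \sum_(l < 6) a l * (x l 0 i * v 0 j * sc D i j k)).
  apply: eq_bigr => i _; apply: eq_bigr => j _.
  rewrite summxE big_distrl big_distrl /=; apply: eq_bigr => l _.
  by rewrite mxE !mulrA.
rewrite summxE.
under [RHS]eq_bigr => l _ do rewrite mxE lbrE big_distrr /=.
rewrite [RHS]exchange_big /=; apply: eq_bigr => i _.
under [RHS]eq_bigr => l _ do rewrite big_distrr /=.
by rewrite [RHS]exchange_big.
Qed.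

Lemma lbr_sumR D (a : 'I_6 -> R) (x : 'I_6 -> 'rV[R]_6) u :
  lbr D u (\sum_i a i *: x i) = \sum_i a i *: lbr D u (x i).
Proof.
apply/rowP => k; rewrite lbrE.
transitivity (\sum_(i < 6) \sum_(j < 6) \sum_(l < 6) a l * (u 0 i * x l 0 j * sc D i j k)).
  apply: eq_bigr => i _; apply: eq_bigr => j _.
  rewrite summxE big_distrr big_distrl /=; apply: eq_bigr => l _.
  by rewrite mxE; ring.
rewrite summxE.
under [RHS]eq_bigr => l _ do rewrite mxE lbrE big_distrr /=.
rewrite [RHS]exchange_big /=; apply: eq_bigr => i _.
under [RHS]eq_bigr => l _ do rewrite big_distrr /=.
by rewrite [RHS]exchange_big.
Qed.

Lemma sum_delta (i : 'I_6) (F : 'I_6 -> R) :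
  \sum_(a < 6) (((0 : 'I_1) == 0) && (a == i))%:R * F a = F i.
Proof.
rewrite (bigD1 i) //= eqxx mul1r big1 ?addr0 // => a Ha.
by rewrite (negbTE Ha) mul0r.
Qed.

Lemma lbr_delta D i j : lbr D (delta_mx 0 i) (delta_mx 0 j) = \row_k sc D i j k.
Proof.
apply/rowP => k; rewrite !mxE.
under eq_bigr => a _ do under eq_bigr => b _ do rewrite !mxE -mulrA.
under eq_bigr => a _ do rewrite -big_distrr /= sum_delta.
by rewrite sum_delta.
Qed.

Lemma lie_iso_basis D1 D2 (A : 'M[R]_6) : A \in unitmx ->
  (forall i j : 'I_6, (\row_k sc D1 i j k) *m A = lbr D2 (row i A) (row j A)) ->
  lie_iso D1 D2.
Proof.
move=> uA H; exists A; split => // u v.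
have -> : lbr D1 u v = lbr D1 (\sum_i u 0 i *: delta_mx 0 i) (\sum_j v 0 j *: delta_mx 0 j)
  by rewrite -!row_sum_delta.
rewrite [u *m A]mulmx_sum_row [v *m A]mulmx_sum_row !lbr_sumL mulmx_suml; apply: eq_bigr => i _.
rewrite !lbr_sumR -scalemxAl mulmx_suml; congr (_ *: _).
apply: eq_bigr => j _.
by rewrite -scalemxAl lbr_delta H.
Qed.

Lemma sc_anti D i j k : sc D i j k = - sc D j i k.
Proof.
rewrite /sc; case: (ltngtP i j) => h //=; rewrite ?opprK ?oppr0 //.
Qed.

Lemma lbr_anti D x y : lbr D x y = - lbr D y x.
Proof.
apply/rowP => k; rewrite !mxE -sumrN exchange_big /=; apply: eq_bigr => i _.
rewrite -sumrN; apply: eq_bigr => j _; rewrite sc_anti; ring.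
Qed.

Lemma lie_iso_basis2 D1 D2 (A : 'M[R]_6) : A \in unitmx ->
  (forall i j : 'I_6, (i < j)%N -> (\row_k sc D1 i j k) *m A = lbr D2 (row i A) (row j A)) ->
  lie_iso D1 D2.
Proof.
move=> uA H; apply: (@lie_iso_basis D1 D2 A uA) => i j.
case: (ltngtP i j) => h; first exact: H.
  rewrite lbr_anti -(H _ _ h).
  apply/rowP => k; rewrite !mxE -sumrN; apply: eq_bigr => l _; rewrite !mxE sc_anti; ring.
have -> : i = j by apply: val_inj.
rewrite [lbr _ _ _]lbr_anti.
have -> : (\row_k sc D1 j j k) = 0 by apply/rowP => k; rewrite !mxE /sc ltnn.
have E : lbr D2 (row j A) (row j A) = 0.
  have hh := lbr_anti D2 (row j A) (row j A).
  have : 2%:R *: lbr D2 (row j A) (row j A) = 0.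
    by rewrite scaler_nat mulr2n {1}hh addNr.
  by move/eqP; rewrite scaler_eq0 pnatr_eq0 /= => /eqP.
by rewrite E mul0mx oppr0.
Qed.

Lemma sum6 (F : 'I_6 -> R) : \sum_(i < 6) F i =
  F (@Ordinal 6 0 isT) + F (@Ordinal 6 1 isT) + F (@Ordinal 6 2 isT) +
  F (@Ordinal 6 3 isT) + F (@Ordinal 6 4 isT) + F (@Ordinal 6 5 isT).
Proof.
rewrite !big_ord_recl big_ord0 /= addr0.
by rewrite !addrA; congr (_ + _ + _ + _ + _ + _); apply: f_equal; apply: val_inj.
Qed.

Definition AP0 (b11 b12 b21 b22 : R) : 'M[R]_6 := \matrix_(i, j)
  match nat_of_ord i, nat_of_ord j with
  | 0, 0 => (b11)%R
  | 0, 3 => (b12)%R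
  | 1, 0 => (b21)%R
  | 1, 3 => (b22)%R
  | 2, 1 => (b11)%R
  | 2, 4 => (b12)%R
  | 3, 1 => (b21)%R
  | 3, 4 => (b22)%R
  | 4, 2 => (b11)%R
  | 4, 5 => (b12)%R
  | 5, 2 => (b21)%R
  | 5, 5 => (b22)%R
  | _, _ => 0 end.

Definition AiP0 (b11 b12 b21 b22 : R) : 'M[R]_6 := \matrix_(i, j)
  match nat_of_ord i, nat_of_ord j with
  | 0, 0 => (b22)%R
  | 0, 1 => (-b12)%R
  | 1, 2 => (b22)%R
  | 1, 3 => (-b12)%R
  | 2, 4 => (b22)%R
  | 2, 5 => (-b12)%R
  | 3, 0 => (-b21)%R
  | 3, 1 => (b11)%R
  | 4, 2 => (-b21)%R
  | 4, 3 => (b11)%R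
  | 5, 4 => (-b21)%R
  | 5, 5 => (b11)%R
  | _, _ => 0 end.

Definition APn (b11 b12 b21 b22 : R) : 'M[R]_6 := \matrix_(i, j)
  match nat_of_ord i, nat_of_ord j with
  | 0, 0 => (b11)%R
  | 0, 5 => (b12)%R
  | 1, 0 => (b21)%R
  | 1, 5 => (b22)%R
  | 2, 1 => (b11)%R
  | 2, 4 => (-(b12))%R
  | 3, 1 => (b21)%R
  | 3, 4 => (-(b22))%R
  | 4, 2 => (b11)%R
  | 4, 3 => (b12)%R
  | 5, 2 => (b21)%R
  | 5, 3 => (b22)%R
  | _, _ => 0 end.

Definition AiPn (b11 b12 b21 b22 : R) : 'M[R]_6 := \matrix_(i, j)
  match nat_of_ord i, nat_of_ord j with
  | 0, 0 => (b22)%R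
  | 0, 1 => (-b12)%R
  | 1, 2 => (b22)%R
  | 1, 3 => (-b12)%R
  | 2, 4 => (b22)%R
  | 2, 5 => (-b12)%R
  | 3, 4 => (-b21)%R
  | 3, 5 => (b11)%R
  | 4, 2 => (-(-b21))%R
  | 4, 3 => (-(b11))%R
  | 5, 0 => (-b21)%R
  | 5, 1 => (b11)%R
  | _, _ => 0 end.

Lemma AP0_unit b11 b12 b21 b22 : b11 * b22 - b12 * b21 != 0 -> AP0 b11 b12 b21 b22 \in unitmx.
Proof.
move=> hd.
have E : AP0 b11 b12 b21 b22 *m AiP0 b11 b12 b21 b22 = (b11 * b22 - b12 * b21)%:M.
  apply/matrixP => i j; rewrite !mxE sum6 !mxE.
  by case: i => [[|[|[|[|[|[|i]]]]]] Hi] //; case: j => [[|[|[|[|[|[|j]]]]]] Hj] //=; ring.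
have : AP0 b11 b12 b21 b22 *m ((b11 * b22 - b12 * b21)^-1 *: AiP0 b11 b12 b21 b22) = 1%:M.
  by rewrite -scalemxAr E scale_scalar_mx mulVf.
by case/mulmx1_unit.
Qed.

Lemma APn_unit b11 b12 b21 b22 : b11 * b22 - b12 * b21 != 0 -> APn b11 b12 b21 b22 \in unitmx.
Proof.
move=> hd.
have E : APn b11 b12 b21 b22 *m AiPn b11 b12 b21 b22 = (b11 * b22 - b12 * b21)%:M.
  apply/matrixP => i j; rewrite !mxE sum6 !mxE.
  by case: i => [[|[|[|[|[|[|i]]]]]] Hi] //; case: j => [[|[|[|[|[|[|j]]]]]] Hj] //=; ring.
have : APn b11 b12 b21 b22 *m ((b11 * b22 - b12 * b21)^-1 *: AiPn b11 b12 b21 b22) = 1%:M.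
  by rewrite -scalemxAr E scale_scalar_mx mulVf.
by case/mulmx1_unit.
Qed.

Ltac basis_tac :=
  let i := fresh "i" in let j := fresh "j" in let k := fresh "k" in
  let Hij := fresh "Hij" in
  move=> i j Hij; apply/rowP => k; rewrite !mxE sum6;
  under eq_bigr do rewrite sum6;
  rewrite sum6 !mxE /=;
  case: i Hij => [[|[|[|[|[|[|i]]]]]] ?] //; case: j => [[|[|[|[|[|[|j]]]]]] ?] //= ?;
  case: k => [[|[|[|[|[|[|k]]]]]] ?] //=; rewrite /sc;
  unfold gxy, so3_so3, so3C, so3_ltimes_R3, so3_oplus_R3, nil_alg; simpl; ring.

Lemma iso_op (x1 x2 n1 n2 : R) : x2 * n1 - x1 * n2 != 0 ->
  lie_iso (gxy x1 x2 (x1*n1) (x1*n2+x2*n1) (x2*n2)) (@so3_oplus_R3 R).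
Proof.
move=> h.
apply: (@lie_iso_basis2 _ _ (AP0 ((x2 * n1 - x1 * n2) * x1) n1 ((x2 * n1 - x1 * n2) * x2) n2)).
  apply: AP0_unit.
  have -> : (x2 * n1 - x1 * n2) * x1 * n2 - n1 * ((x2 * n1 - x1 * n2) * x2) =
    - ((x2 * n1 - x1 * n2) * (x2 * n1 - x1 * n2)) by ring.
  by rewrite oppr_eq0 mulf_neq0.
basis_tac.
Qed.

Lemma iso_ss (x1 x2 m1 m2 n1 n2 : R) : x2 * m1 - x1 * m2 != 0 -> x2 * n1 - x1 * n2 != 0 ->
  m1 * n2 - m2 * n1 != 0 ->
  lie_iso (gxy x1 x2 (m1*n1) (m1*n2+m2*n1) (m2*n2)) (@so3_so3 R).
Proof.
move=> h1 h2 h3.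
apply: (@lie_iso_basis2 _ _ (AP0 ((x2 * n1 - x1 * n2) * m1) ((x2 * m1 - x1 * m2) * n1)
   ((x2 * n1 - x1 * n2) * m2) ((x2 * m1 - x1 * m2) * n2))).
  apply: AP0_unit.
  have -> : (x2 * n1 - x1 * n2) * m1 * ((x2 * m1 - x1 * m2) * n2) -
    (x2 * m1 - x1 * m2) * n1 * ((x2 * n1 - x1 * n2) * m2) =
    (x2 * n1 - x1 * n2) * (x2 * m1 - x1 * m2) * (m1 * n2 - m2 * n1) by ring.
  by rewrite !mulf_neq0.
basis_tac.
Qed.

Lemma iso_C (c x1 x2 p1 q1 p2 q2 : R) : c != 0 ->
  (x2 * p1 - x1 * p2) ^+ 2 + (x2 * q1 - x1 * q2) ^+ 2 != 0 -> p1 * q2 - q1 * p2 != 0 ->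
  lie_iso (gxy x1 x2 (c * (p1 ^+ 2 + q1 ^+ 2)) (c * (2 * (p1 * p2 + q1 * q2)))
     (c * (p2 ^+ 2 + q2 ^+ 2))) (@so3C R).
Proof.
move=> h1 h2 h3.
apply: (@lie_iso_basis2 _ _ (AP0
  (c * ((x2 * p1 - x1 * p2) * p1 + (x2 * q1 - x1 * q2) * q1))
  (c * ((x2 * p1 - x1 * p2) * q1 - (x2 * q1 - x1 * q2) * p1))
  (c * ((x2 * p1 - x1 * p2) * p2 + (x2 * q1 - x1 * q2) * q2))
  (c * ((x2 * p1 - x1 * p2) * q2 - (x2 * q1 - x1 * q2) * p2)))).
  apply: AP0_unit.
  have -> : c * ((x2 * p1 - x1 * p2) * p1 + (x2 * q1 - x1 * q2) * q1) *
    (c * ((x2 * p1 - x1 * p2) * q2 - (x2 * q1 - x1 * q2) * p2)) -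
    c * ((x2 * p1 - x1 * p2) * q1 - (x2 * q1 - x1 * q2) * p1) *
    (c * ((x2 * p1 - x1 * p2) * p2 + (x2 * q1 - x1 * q2) * q2)) =
    c * c * ((x2 * p1 - x1 * p2) ^+ 2 + (x2 * q1 - x1 * q2) ^+ 2) * (p1 * q2 - q1 * p2) by ring.
  by rewrite !mulf_neq0.
basis_tac.
Qed.

Lemma iso_lt (c x1 x2 m1 m2 : R) : c != 0 -> x2 * m1 - x1 * m2 != 0 ->
  lie_iso (gxy x1 x2 (c * (m1 * m1)) (c * (2 * m1 * m2)) (c * (m2 * m2))) (@so3_ltimes_R3 R).
Proof.
move=> h1 h2.
apply: (@lie_iso_basis2 _ _ (AP0 (c * ((x2 * m1 - x1 * m2) * m1)) (c * x1)
  (c * ((x2 * m1 - x1 * m2) * m2)) (c * x2))).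
  apply: AP0_unit.
  have -> : c * ((x2 * m1 - x1 * m2) * m1) * (c * x2) - c * x1 * (c * ((x2 * m1 - x1 * m2) * m2))
    = c * c * ((x2 * m1 - x1 * m2) * (x2 * m1 - x1 * m2)) by ring.
  by rewrite !mulf_neq0.
basis_tac.
Qed.

Lemma iso_nil (c x1 x2 : R) : c != 0 -> x1 ^+ 2 + x2 ^+ 2 != 0 ->
  lie_iso (gxy x1 x2 (c * x1 ^+ 2) (c * (2 * x1 * x2)) (c * x2 ^+ 2)) (@nil_alg R).
Proof.
move=> h1 h2.
apply: (@lie_iso_basis2 _ _ (APn (c * (x1 ^+ 2 + x2 ^+ 2) * x1) (- (c * (x1 ^+ 2 + x2 ^+ 2) * x2))
  (c * (x1 ^+ 2 + x2 ^+ 2) * x2) (c * (x1 ^+ 2 + x2 ^+ 2) * x1))).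
  apply: APn_unit.
  have -> : c * (x1 ^+ 2 + x2 ^+ 2) * x1 * (c * (x1 ^+ 2 + x2 ^+ 2) * x1) -
    - (c * (x1 ^+ 2 + x2 ^+ 2) * x2) * (c * (x1 ^+ 2 + x2 ^+ 2) * x2) =
    c * c * (x1 ^+ 2 + x2 ^+ 2) * (x1 ^+ 2 + x2 ^+ 2) * (x1 ^+ 2 + x2 ^+ 2) by ring.
  by rewrite !mulf_neq0.
basis_tac.
Qed.

End S.


Section A.
Variable R : realType.

Lemma fact_plus (y1 y2 y3 : R) : 0 < Delta y1 y2 y3 ->
  exists m1 m2 n1 n2 : R, [/\ y1 = m1 * n1, y2 = m1 * n2 + m2 * n1 & y3 = m2 * n2].
Proof.
rewrite /Delta => hD.
have [->|h1] := eqVneq y1 0.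
  by exists 0, 1, y2, y3; split; ring.
set s := Num.sqrt (y2 ^+ 2 - 4 * y1 * y3).
have hs : s ^+ 2 = y2 ^+ 2 - 4 * y1 * y3 by rewrite sqr_sqrtr // ltW.
exists y1, ((y2 - s) / 2), 1, ((y2 + s) / (2 * y1)); split.
- by rewrite mulr1.
- by field.
- have -> : (y2 - s) / 2 * ((y2 + s) / (2 * y1)) = (y2 ^+ 2 - s ^+ 2) / (4 * y1) by field.
  by rewrite hs; field.
Qed.

Lemma fact_minus_pos (y1 y2 y3 : R) : 0 < y1 -> Delta y1 y2 y3 < 0 ->
  exists p1 q1 p2 q2 : R, [/\ y1 = p1 ^+ 2 + q1 ^+ 2, y2 = 2 * (p1 * p2 + q1 * q2),
     y3 = p2 ^+ 2 + q2 ^+ 2 & p1 * q2 - q1 * p2 != 0].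
Proof.
rewrite /Delta => h1 hD.
set r := Num.sqrt y1.
have hr : r ^+ 2 = y1 by rewrite sqr_sqrtr // ltW.
have hr0 : r != 0 by rewrite sqrtr_eq0 -ltNge.
set s := Num.sqrt (- (y2 ^+ 2 - 4 * y1 * y3)).
have hs : s ^+ 2 = - (y2 ^+ 2 - 4 * y1 * y3) by rewrite sqr_sqrtr // oppr_ge0 ltW.
have hs0 : s != 0 by rewrite sqrtr_eq0 -ltNge oppr_gt0.
exists r, 0, (y2 / (2 * r)), (s / (2 * r)); split.
- by rewrite hr; ring.
- by field.
- have -> : (y2 / (2 * r)) ^+ 2 + (s / (2 * r)) ^+ 2 = (y2 ^+ 2 + s ^+ 2) / (4 * r ^+ 2) by field.
  by rewrite hs hr; field; rewrite -hr expf_neq0.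
- have -> : r * (s / (2 * r)) - 0 * (y2 / (2 * r)) = s / 2 by field.
  by rewrite mulf_neq0 // invr_eq0 pnatr_eq0.
Qed.

Lemma fact_minus (y1 y2 y3 : R) : Delta y1 y2 y3 < 0 ->
  exists c p1 q1 p2 q2 : R, [/\ c != 0, y1 = c * (p1 ^+ 2 + q1 ^+ 2),
     y2 = c * (2 * (p1 * p2 + q1 * q2)), y3 = c * (p2 ^+ 2 + q2 ^+ 2) & p1 * q2 - q1 * p2 != 0].
Proof.
move=> hD.
have hy1 : y1 != 0.
  by apply/eqP => h; move: hD; rewrite /Delta h; nra.
case: (ltgtP y1 0) hy1 => // h1 _.
  have [p1 [q1 [p2 [q2 [e1 e2 e3 e4]]]]] : exists p1 q1 p2 q2 : R,
      [/\ - y1 = p1 ^+ 2 + q1 ^+ 2, - y2 = 2 * (p1 * p2 + q1 * q2),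
     - y3 = p2 ^+ 2 + q2 ^+ 2 & p1 * q2 - q1 * p2 != 0].
    by apply: fact_minus_pos; [rewrite oppr_gt0 | move: hD; rewrite /Delta; nra].
  exists (-1), p1, q1, p2, q2; split => //.
  - by rewrite oppr_eq0 oner_eq0.
  - by rewrite -e1; ring.
  - by rewrite -e2; ring.
  - by rewrite -e3; ring.
have [p1 [q1 [p2 [q2 [e1 e2 e3 e4]]]]] := @fact_minus_pos y1 y2 y3 h1 hD.
by exists 1, p1, q1, p2, q2; split; rewrite ?mul1r ?oner_eq0.
Qed.

Lemma fact_zero_pos (y1 y2 y3 : R) : 0 < y1 -> Delta y1 y2 y3 = 0 ->
  exists m1 m2 : R, [/\ y1 = m1 * m1, y2 = 2 * m1 * m2 & y3 = m2 * m2].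
Proof.
rewrite /Delta => h1 hD.
set r := Num.sqrt y1.
have hr : r ^+ 2 = y1 by rewrite sqr_sqrtr // ltW.
have hr0 : r != 0 by rewrite sqrtr_eq0 -ltNge.
exists r, (y2 / (2 * r)); split.
- by rewrite -hr expr2.
- by field.
- have -> : y2 / (2 * r) * (y2 / (2 * r)) = y2 ^+ 2 / (4 * r ^+ 2) by field.
  have -> : y2 ^+ 2 = 4 * y1 * y3 by apply/eqP; rewrite -subr_eq0 hD.
  by rewrite hr; field; rewrite -hr expf_neq0.
Qed.

Lemma fact_zero (y1 y2 y3 : R) : Delta y1 y2 y3 = 0 -> (y1, y2, y3) <> (0, 0, 0) ->
  exists c m1 m2 : R, [/\ c != 0, y1 = c * (m1 * m1), y2 = c * (2 * m1 * m2) & y3 = c * (m2 * m2)].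
Proof.
move=> hD hy.
case: (ltgtP y1 0) => h1.
- have [m1 [m2 [e1 e2 e3]]] : exists m1 m2 : R, [/\ - y1 = m1 * m1, - y2 = 2 * m1 * m2 & - y3 = m2 * m2].
    by apply: fact_zero_pos; [rewrite oppr_gt0 | rewrite -hD /Delta; ring].
  exists (-1), m1, m2; split.
  + by rewrite oppr_eq0 oner_eq0.
  + by rewrite -e1; ring.
  + by rewrite -e2; ring.
  + by rewrite -e3; ring.
- have [m1 [m2 [e1 e2 e3]]] := @fact_zero_pos y1 y2 y3 h1 hD.
  by exists 1, m1, m2; split; rewrite ?mul1r ?oner_eq0.
have h2 : y2 = 0 by move: hD; rewrite /Delta h1; nra.
have h3 : y3 != 0 by apply/eqP => h3; apply: hy; rewrite h1 h2 h3.
case: (ltgtP y3 0) h3 => // h3 _.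
  exists (-1), 0, (Num.sqrt (- y3)); split.
  + by rewrite oppr_eq0 oner_eq0.
  + by rewrite h1; ring.
  + by rewrite h2; ring.
  + by rewrite -expr2 sqr_sqrtr ?oppr_ge0 ?ltW //; ring.
exists 1, 0, (Num.sqrt y3); split.
+ by rewrite oner_eq0.
+ by rewrite h1; ring.
+ by rewrite h2; ring.
+ by rewrite -expr2 sqr_sqrtr ?ltW //; ring.
Qed.

Lemma fact_op (x1 x2 y1 y2 y3 : R) : (x1, x2) <> (0, 0) -> Res x1 x2 y1 y2 y3 = 0 ->
  exists n1 n2 : R, [/\ y1 = x1 * n1, y2 = x1 * n2 + x2 * n1 & y3 = x2 * n2].
Proof.
rewrite /Res => hx hR.
have [h1|h1] := eqVneq x1 0.
  have h2 : x2 != 0 by apply/eqP => h2; apply: hx; rewrite h1 h2.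
  have hy1 : y1 = 0.
    have : x2 ^+ 2 * y1 = 0 by rewrite -hR h1; ring.
    by move/eqP; rewrite mulf_eq0 expf_eq0 (negbTE h2) /= => /eqP.
  exists (y2 / x2), (y3 / x2); split.
  - by rewrite hy1 h1; ring.
  - by rewrite h1; field.
  - by field.
have E : y3 * x1 ^+ 2 = y2 * x2 * x1 - x2 ^+ 2 * y1.
  by apply/eqP; rewrite -subr_eq0 -hR; apply/eqP; ring.
exists (y1 / x1), ((y2 * x1 - x2 * y1) / x1 ^+ 2); split.
- by field.
- by field.
- have -> : y3 = (y3 * x1 ^+ 2) / x1 ^+ 2 by field.
  by rewrite E; field.
Qed.

Lemma fact_nil (x1 x2 y1 y2 y3 : R) : (x1, x2) <> (0, 0) -> Delta y1 y2 y3 = 0 ->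
  Res x1 x2 y1 y2 y3 = 0 ->
  exists c : R, [/\ y1 = c * x1 ^+ 2, y2 = c * (2 * x1 * x2) & y3 = c * x2 ^+ 2].
Proof.
rewrite /Res /Delta => hx hD hR.
have [h1|h1] := eqVneq x1 0.
  have h2 : x2 != 0 by apply/eqP => h2; apply: hx; rewrite h1 h2.
  have hy1 : y1 = 0.
    have : x2 ^+ 2 * y1 = 0 by rewrite -hR h1; ring.
    by move/eqP; rewrite mulf_eq0 expf_eq0 (negbTE h2) /= => /eqP.
  have hy2 : y2 = 0.
    have : y2 ^+ 2 = 0 by rewrite -hD hy1; ring.
    by move/eqP; rewrite expf_eq0 /= => /eqP.
  exists (y3 / x2 ^+ 2); split.
  - by rewrite hy1 h1; ring.
  - by rewrite hy2 h1; ring.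
  - by field.
have F : (y2 * x1 - 2 * y1 * x2) ^+ 2 = 0.
  have -> : (y2 * x1 - 2 * y1 * x2) ^+ 2 =
    x1 ^+ 2 * (y2 ^+ 2 - 4 * y1 * y3) + 4 * y1 * (x2 ^+ 2 * y1 + y3 * x1 ^+ 2 - y2 * x2 * x1)
    by ring.
  by rewrite hD hR; ring.
have G : y2 * x1 = 2 * y1 * x2.
  by move/eqP: F; rewrite expf_eq0 /= subr_eq0 => /eqP.
have E : y3 * x1 ^+ 2 = y2 * x2 * x1 - x2 ^+ 2 * y1.
  by apply/eqP; rewrite -subr_eq0 -hR; apply/eqP; ring.
exists (y1 / x1 ^+ 2); split.
- by field.
- have -> : y2 = (y2 * x1) / x1 by field.
  by rewrite G; field.
- have -> : y3 = (y3 * x1 ^+ 2) / x1 ^+ 2 by field.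
  rewrite E.
  have -> : y2 * x2 * x1 = (y2 * x1) * x2 by ring.
  by rewrite G; field.
Qed.

Lemma partB (x1 x2 y1 y2 y3 : R) :
    (inMplus x1 x2 y1 y2 y3 -> lie_iso (gxy x1 x2 y1 y2 y3) (@so3_so3 R)) /\
    (inMminus x1 x2 y1 y2 y3 -> lie_iso (gxy x1 x2 y1 y2 y3) (@so3C R)) /\
    (inS1 x1 x2 y1 y2 y3 -> ~ inC x1 x2 y1 y2 y3 ->
       lie_iso (gxy x1 x2 y1 y2 y3) (@so3_ltimes_R3 R)) /\
    (inS2 x1 x2 y1 y2 y3 -> ~ inC x1 x2 y1 y2 y3 ->
       lie_iso (gxy x1 x2 y1 y2 y3) (@so3_oplus_R3 R)) /\
    (inC x1 x2 y1 y2 y3 -> lie_iso (gxy x1 x2 y1 y2 y3) (@nil_alg R)).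
Proof.
split.
  move=> [[hx hy] [hD hR]].
  have [m1 [m2 [n1 [n2 [e1 e2 e3]]]]] := fact_plus _ _ _ hD.
  subst y1 y2 y3.
  have ER : Res x1 x2 (m1 * n1) (m1 * n2 + m2 * n1) (m2 * n2) =
    (x2 * m1 - x1 * m2) * (x2 * n1 - x1 * n2) by rewrite /Res; ring.
  have ED : Delta (m1 * n1) (m1 * n2 + m2 * n1) (m2 * n2) = (m1 * n2 - m2 * n1) ^+ 2
    by rewrite /Delta; ring.
  move: hR; rewrite ER mulf_eq0 negb_or => /andP[hm hn].
  apply: iso_ss => //.
  by apply/eqP => h; move: hD; rewrite ED h expr0n /= ltxx.
split.
  move=> [[hx hy] [hD hR]].
  have [c [p1 [q1 [p2 [q2 [hc e1 e2 e3 hpq]]]]]] := fact_minus _ _ _ hD.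
  subst y1 y2 y3.
  apply: iso_C => //.
  have ER : Res x1 x2 (c * (p1 ^+ 2 + q1 ^+ 2)) (c * (2 * (p1 * p2 + q1 * q2)))
     (c * (p2 ^+ 2 + q2 ^+ 2)) = c * ((x2 * p1 - x1 * p2) ^+ 2 + (x2 * q1 - x1 * q2) ^+ 2)
     by rewrite /Res; ring.
  by move: hR; rewrite ER mulf_eq0 negb_or => /andP[].
split.
  move=> [[hx hy] hD] hC.
  have hR : Res x1 x2 y1 y2 y3 != 0.
    by apply/eqP => hR; apply: hC; split; split.
  have [c [m1 [m2 [hc e1 e2 e3]]]] := fact_zero _ _ _ hD hy.
  subst y1 y2 y3.
  apply: iso_lt => //.
  have ER : Res x1 x2 (c * (m1 * m1)) (c * (2 * m1 * m2)) (c * (m2 * m2)) =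
    c * ((x2 * m1 - x1 * m2) * (x2 * m1 - x1 * m2)) by rewrite /Res; ring.
  by move: hR; rewrite ER mulf_eq0 negb_or mulf_eq0 negb_or => /andP[_ /andP[]].
split.
  move=> [[hx hy] hR] hC.
  have hD : Delta y1 y2 y3 != 0.
    by apply/eqP => hD; apply: hC; split; split.
  have [n1 [n2 [e1 e2 e3]]] := fact_op _ _ _ _ _ hx hR.
  subst y1 y2 y3.
  apply: iso_op.
  have ED : Delta (x1 * n1) (x1 * n2 + x2 * n1) (x2 * n2) = (x2 * n1 - x1 * n2) ^+ 2
    by rewrite /Delta; ring.
  by move: hD; rewrite ED expf_eq0.
move=> [[[hx hy] hD] [_ hR]].
have [c [e1 e2 e3]] := fact_nil _ _ _ _ _ hx hD hR.
subst y1 y2 y3.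
have hc : c != 0.
  by apply/eqP => hc; apply: hy; rewrite hc !mul0r.
apply: iso_nil => //.
apply/eqP => h.
have hx1 : x1 = 0 by nra.
have hx2 : x2 = 0 by nra.
by apply: hx; rewrite hx1 hx2.
Qed.

End A.

Import numFieldNormedType.Exports.


Section C.
Variable R : realType.
Implicit Types f g : R -> R.

Lemma cC (c : R) : continuous (fun _ : R => c).
Proof. exact: cst_continuous. Qed.
Lemma cI : continuous (fun t : R => t).
Proof. by move=> x; exact: cvg_id. Qed.
Lemma cD f g : continuous f -> continuous g -> continuous (fun t => f t + g t).
Proof. move=> hf hg x; exact: (continuousD (hf x) (hg x)). Qed.
Lemma cM f g : continuous f -> continuous g -> continuous (fun t => f t * g t).
Proof. move=> hf hg x; exact: (continuousM (hf x) (hg x)). Qed.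
Lemma cN f : continuous f -> continuous (fun t => - f t).
Proof. move=> hf x; exact: (continuousN (hf x)). Qed.
Lemma cB f g : continuous f -> continuous g -> continuous (fun t => f t - g t).
Proof. by move=> hf hg; apply: cD => //; apply: cN. Qed.
Lemma cX f n : continuous f -> continuous (fun t => f t ^+ n).
Proof.
move=> hf; elim: n => [|n IH]; first exact: cC.
by under eq_fun do rewrite exprS; apply: cM.
Qed.

Ltac cont := repeat match goal with
  | |- continuous (fun _ => ?c) => exact: cC
  | |- continuous (fun t => t) => exact: cI
  | |- continuous (fun t => @?f t + @?g t) => apply: (cD f g)
  | |- continuous (fun t => @?f t * @?g t) => apply: (cM f g)
  | |- continuous (fun t => - @?f t) => apply: (cN f)
  | |- continuous (fun t => @?f t ^+ ?n) => apply: (cX f n)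
  end.


Definition Q (y1 y2 y3 v1 v2 : R) := y1 * v1 ^+ 2 + y2 * v1 * v2 + y3 * v2 ^+ 2.

Lemma ResQ x1 x2 y1 y2 y3 : Res x1 x2 y1 y2 y3 = Q y1 y2 y3 x2 (- x1).
Proof. rewrite /Res /Q; ring. Qed.

Lemma res_repM {x1 x2 y1 y2 y3 : R} : Res x1 x2 y1 y2 y3 != 0 -> repM x1 x2 y1 y2 y3.
Proof.
move=> h; split => [[e1 e2]|[e1 e2 e3]]; move: h; rewrite /Res ?e1 ?e2 ?e3 => /eqP; apply; ring.
Qed.

Lemma plus_of {x1 x2 y1 y2 y3 : R} : 0 < Delta y1 y2 y3 -> Res x1 x2 y1 y2 y3 != 0 ->
  inMplus x1 x2 y1 y2 y3.
Proof. by move=> hD hR; split; [apply: res_repM|split]. Qed.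

Lemma minus_of {x1 x2 y1 y2 y3 : R} : Delta y1 y2 y3 < 0 -> Res x1 x2 y1 y2 y3 != 0 ->
  inMminus x1 x2 y1 y2 y3.
Proof. by move=> hD hR; split; [apply: res_repM|split]. Qed.

Lemma posQ {y1 y2 y3 v1 v2 : R} : 0 < y1 -> Delta y1 y2 y3 < 0 -> (v1, v2) <> (0, 0) ->
  0 < Q y1 y2 y3 v1 v2.
Proof.
rewrite /Delta /Q => h1 hD hv.
have E : 4 * y1 * (y1 * v1 ^+ 2 + y2 * v1 * v2 + y3 * v2 ^+ 2) =
  (2 * y1 * v1 + y2 * v2) ^+ 2 - (y2 ^+ 2 - 4 * y1 * y3) * v2 ^+ 2 by ring.
have [h2|h2] := eqVneq v2 0.
  have h1' : v1 != 0 by apply/eqP => e; apply: hv; rewrite e h2.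
  rewrite h2; have : 0 < v1 ^+ 2 by rewrite lt0r sqrf_eq0 h1' sqr_ge0.
  nra.
have : 0 < v2 ^+ 2 by rewrite lt0r sqrf_eq0 h2 sqr_ge0.
have : 0 <= (2 * y1 * v1 + y2 * v2) ^+ 2 by exact: sqr_ge0.
nra.
Qed.

Lemma minus_res {x1 x2 y1 y2 y3 : R} : Delta y1 y2 y3 < 0 -> (x1, x2) <> (0, 0) ->
  Res x1 x2 y1 y2 y3 != 0.
Proof.
move=> hD hx; rewrite ResQ.
have hv : (x2, - x1) <> (0, 0).
  by case=> e1 e2; apply: hx; rewrite e1 -[x1]opprK e2 oppr0.
have hy1 : y1 != 0 by apply/eqP => h; move: hD; rewrite /Delta h; nra.
case: (ltgtP y1 0) hy1 => // h1 _.
  have : 0 < Q (- y1) (- y2) (- y3) x2 (- x1).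
    by apply: posQ => //; [rewrite oppr_gt0 | move: hD; rewrite /Delta; nra].
  rewrite /Q => h; apply/eqP => e; move: h; rewrite /Q in e; nra.
by rewrite gt_eqF // posQ.
Qed.

Lemma posdef_conv {z1 z2 z3 w1 w2 w3 t : R} : 0 < z1 -> Delta z1 z2 z3 < 0 ->
  0 < w1 -> Delta w1 w2 w3 < 0 -> 0 <= t <= 1 ->
  Delta ((1 - t) * z1 + t * w1) ((1 - t) * z2 + t * w2) ((1 - t) * z3 + t * w3) < 0.
Proof.
move=> hz1 hz hw1 hw /andP[t0 t1].
set u1 := (1 - t) * z1 + t * w1; set u2 := (1 - t) * z2 + t * w2;
  set u3 := (1 - t) * z3 + t * w3.
have hu1 : 0 < u1 by rewrite /u1; nra.
have hv : (- u2, 2 * u1) <> (0, 0) by case=> _ e; nra.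
have Qz := posQ hz1 hz hv; have Qw := posQ hw1 hw hv.
have E : Q u1 u2 u3 (- u2) (2 * u1) = (1 - t) * Q z1 z2 z3 (- u2) (2 * u1) + t * Q w1 w2 w3 (- u2) (2 * u1)
  by rewrite /Q /u1 /u2 /u3; ring.
have E2 : Q u1 u2 u3 (- u2) (2 * u1) = - u1 * Delta u1 u2 u3 by rewrite /Q /Delta; ring.
have : 0 < Q u1 u2 u3 (- u2) (2 * u1) by rewrite E; nra.
rewrite E2; nra.
Qed.

Lemma seg_nz {a1 a2 b1 b2 t : R} : (a1, a2) <> (0, 0) -> (b1, b2) <> (0, 0) ->
  ~ (a1 * b2 - a2 * b1 = 0 /\ a1 * b1 + a2 * b2 < 0) -> 0 <= t <= 1 ->
  ((1 - t) * a1 + t * b1, (1 - t) * a2 + t * b2) <> (0, 0).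
Proof.
move=> ha hb hab /andP[t0 t1] [e1 e2].
have [t0e|tn0] := eqVneq t 0.
  by apply: ha; move: e1 e2; rewrite t0e subr0 !mul1r !mul0r !addr0 => -> ->.
have [t1e|tn1] := eqVneq t 1.
  by apply: hb; move: e1 e2; rewrite t1e subrr !mul0r !mul1r !add0r => -> ->.
have tp : 0 < t by rewrite lt0r tn0.
have t1p : 0 < 1 - t by rewrite subr_gt0 lt_neqAle tn1.
apply: hab; split.
  have : t * (a1 * b2 - a2 * b1) = 0.
    have -> : t * (a1 * b2 - a2 * b1) = a1 * ((1 - t) * a2 + t * b2) - a2 * ((1 - t) * a1 + t * b1) by ring.
    by rewrite e1 e2; ring.
  by move/eqP; rewrite mulf_eq0 (negbTE tn0) /= => /eqP.
have na : 0 < a1 ^+ 2 + a2 ^+ 2.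
  have [h|h] := eqVneq a1 0.
    have h2 : a2 != 0 by apply/eqP => h2; apply: ha; rewrite h h2.
    by rewrite h expr0n /= add0r lt0r sqrf_eq0 h2 sqr_ge0.
  have : 0 < a1 ^+ 2 by rewrite lt0r sqrf_eq0 h sqr_ge0.
  have := sqr_ge0 a2; nra.
have : (1 - t) * (a1 ^+ 2 + a2 ^+ 2) + t * (a1 * b1 + a2 * b2) = 0.
  have -> : (1 - t) * (a1 ^+ 2 + a2 ^+ 2) + t * (a1 * b1 + a2 * b2) =
    a1 * ((1 - t) * a1 + t * b1) + a2 * ((1 - t) * a2 + t * b2) by ring.
  by rewrite e1 e2; ring.
nra.
Qed.

Lemma delta_scale (c y1 y2 y3 : R) : Delta (c * y1) (c * y2) (c * y3) = c ^+ 2 * Delta y1 y2 y3.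
Proof. rewrite /Delta; ring. Qed.

Lemma sign_exists (a : R) : a != 0 -> exists s : R, s ^+ 2 = 1 /\ 0 < s * a.
Proof.
move=> ha; case: (ltgtP a 0) ha => // h _.
  by exists (-1); split; [rewrite sqrrN expr1n | rewrite mulN1r oppr_gt0].
by exists 1; split; [rewrite expr1n | rewrite mul1r].
Qed.

Lemma path_minus p q : in5 (@inMminus R) p -> in5 (@inMminus R) q -> path_in (@inMminus R) p q.
Proof.
case: p => [[[[p1 p2] p3] p4] p5]; case: q => [[[[q1 q2] q3] q4] q5] /=.
move=> [[hpx hpy] [hpD _]] [[hqx hqy] [hqD _]].
have hp3 : p3 != 0 by apply/eqP => h; move: hpD; rewrite /Delta h; nra.
have hq3 : q3 != 0 by apply/eqP => h; move: hqD; rewrite /Delta h; nra.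
have [lam [hl0 hl]] : exists lam : R, lam != 0 /\
    ~ (p1 * (lam * q2) - p2 * (lam * q1) = 0 /\ p1 * (lam * q1) + p2 * (lam * q2) < 0).
  case: (boolP ((p1 * q2 - p2 * q1 == 0) && (p1 * q1 + p2 * q2 < 0))) => [/andP[h1 h2]|h].
    exists (-1); split; first by rewrite oppr_eq0 oner_eq0.
    by case => _; move/eqP: h1 => h1; nra.
  exists 1; split; first by rewrite oner_eq0.
  by rewrite !mul1r => -[/eqP h1 h2]; move: h; rewrite h1 h2.
have [s [hs2 hs]] := sign_exists _ hp3.
have hsq : s * q3 != 0 by rewrite mulf_neq0 //; apply/eqP => e; move: hs2; rewrite e expr0n /= => /eqP; rewrite eq_sym oner_eq0.
have [mu [hmu2 hmu]] := sign_exists _ hsq.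
rewrite /path_in /=.
exists (fun t => (1 - t) * p1 + t * (lam * q1)), (fun t => (1 - t) * p2 + t * (lam * q2)),
  (fun t => (1 - t) * p3 + t * (mu * q3)), (fun t => (1 - t) * p4 + t * (mu * q4)),
  (fun t => (1 - t) * p5 + t * (mu * q5)), lam, mu.
split; first by split; cont.
split => //.
split; first by apply/eqP => e; move: hmu2; rewrite e expr0n /= => /eqP; rewrite eq_sym oner_eq0.
split; first by split; ring.
split; first by split; ring.
move=> t ht.
have hx : ((1 - t) * p1 + t * (lam * q1), (1 - t) * p2 + t * (lam * q2)) <> (0, 0).
  apply: seg_nz => //.
  by case => e1 e2; apply: hqx; apply/eqP; rewrite xpair_eqE; apply/andP; split;
     apply/eqP; apply: (mulfI hl0); rewrite mulr0.
have hD : Delta ((1 - t) * p3 + t * (mu * q3)) ((1 - t) * p4 + t * (mu * q4))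
    ((1 - t) * p5 + t * (mu * q5)) < 0.
  have H : Delta ((1 - t) * (s * p3) + t * (s * mu * q3)) ((1 - t) * (s * p4) + t * (s * mu * q4))
    ((1 - t) * (s * p5) + t * (s * mu * q5)) < 0.
    apply: posdef_conv => //.
    - by rewrite delta_scale hs2 mul1r.
    - by rewrite -mulrA mulrCA.
    - by rewrite -!mulrA !delta_scale hs2 hmu2 !mul1r.
  have E3 : (1 - t) * (s * p3) + t * (s * mu * q3) = s * ((1 - t) * p3 + t * (mu * q3)) by ring.
  have E4 : (1 - t) * (s * p4) + t * (s * mu * q4) = s * ((1 - t) * p4 + t * (mu * q4)) by ring.
  have E5 : (1 - t) * (s * p5) + t * (s * mu * q5) = s * ((1 - t) * p5 + t * (mu * q5)) by ring.
  by move: H; rewrite E3 E4 E5 delta_scale hs2 mul1r.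
by apply: minus_of => //; apply: minus_res.
Qed.

Record M2 := mk2 { e11 : R; e12 : R; e21 : R; e22 : R }.

Definition ax1 (g : M2) (x1 x2 : R) := e11 g * x1 + e12 g * x2.
Definition ax2 (g : M2) (x1 x2 : R) := e21 g * x1 + e22 g * x2.
Definition ay1 (g : M2) (y1 y2 y3 : R) := y1 * e11 g ^+ 2 + y2 * e11 g * e12 g + y3 * e12 g ^+ 2.
Definition ay2 (g : M2) (y1 y2 y3 : R) :=
  2 * y1 * e11 g * e21 g + y2 * (e11 g * e22 g + e12 g * e21 g) + 2 * y3 * e12 g * e22 g.
Definition ay3 (g : M2) (y1 y2 y3 : R) := y1 * e21 g ^+ 2 + y2 * e21 g * e22 g + y3 * e22 g ^+ 2.
Definition det2 (g : M2) := e11 g * e22 g - e12 g * e21 g.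
Definition tr2 (g : M2) := e11 g + e22 g.
Definition mm (g h : M2) := mk2 (e11 g * e11 h + e12 g * e21 h) (e11 g * e12 h + e12 g * e22 h)
  (e21 g * e11 h + e22 g * e21 h) (e21 g * e12 h + e22 g * e22 h).
Definition adj2 (g : M2) := mk2 (e22 g) (- e12 g) (- e21 g) (e11 g).
Definition sc2 (s : R) (g : M2) := mk2 (s * e11 g) (s * e12 g) (s * e21 g) (s * e22 g).
Definition gpath (H : M2) (t : R) := mk2 (1 - t + t * e11 H) (t * e12 H) (t * e21 H) (1 - t + t * e22 H).

Lemma Delta_ay (g : M2) (y1 y2 y3 : R) : Delta (ay1 g y1 y2 y3) (ay2 g y1 y2 y3) (ay3 g y1 y2 y3) =
  det2 g ^+ 2 * Delta y1 y2 y3.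
Proof. by case: g => a b c d; rewrite /Delta /ay1 /ay2 /ay3 /det2 /=; ring. Qed.

Lemma Res_a (g : M2) (x1 x2 y1 y2 y3 : R) : Res (ax1 g x1 x2) (ax2 g x1 x2)
  (ay1 g y1 y2 y3) (ay2 g y1 y2 y3) (ay3 g y1 y2 y3) = det2 g ^+ 2 * Res x1 x2 y1 y2 y3.
Proof. by case: g => a b c d; rewrite /Res /ax1 /ax2 /ay1 /ay2 /ay3 /det2 /=; ring. Qed.

Lemma det_gt H t : 0 < det2 H -> 0 <= tr2 H -> 0 <= t <= 1 -> 0 < det2 (gpath H t).
Proof.
case: H => a b c d; rewrite /det2 /tr2 /gpath /= => hd ht /andP[t0 t1].
have -> : (1 - t + t * a) * (1 - t + t * d) - t * b * (t * c) =
  (1 - t) ^+ 2 + (1 - t) * t * (a + d) + t ^+ 2 * (a * d - b * c) by ring.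
have [->|tn1] := eqVneq t 1; first by rewrite subrr expr0n /= !mul0r !add0r expr1n mul1r.
have h1 : 0 < 1 - t by rewrite subr_gt0 lt_neqAle tn1.
have : 0 < (1 - t) ^+ 2 by rewrite exprn_gt0.
have : 0 <= (1 - t) * t * (a + d) by rewrite !mulr_ge0 // ltW.
have : 0 <= t ^+ 2 * (a * d - b * c) by rewrite mulr_ge0 ?sqr_ge0 // ltW.
lra.
Qed.

Lemma path_act (H : M2) p q (lam mu : R) : in5 (@inMplus R) p ->
  0 < det2 H -> 0 <= tr2 H -> lam != 0 -> mu != 0 ->
  (let: (p1, p2, p3, p4, p5) := p in let: (q1, q2, q3, q4, q5) := q in
   [/\ ax1 H p1 p2 = lam * q1, ax2 H p1 p2 = lam * q2, ay1 H p3 p4 p5 = mu * q3,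
       ay2 H p3 p4 p5 = mu * q4 & ay3 H p3 p4 p5 = mu * q5]) ->
  path_in (@inMplus R) p q.
Proof.
case: p => [[[[p1 p2] p3] p4] p5]; case: q => [[[[q1 q2] q3] q4] q5] /=.
move=> [_ [hD hR]] hd ht hl hm [e1 e2 e3 e4 e5].
exists (fun t => ax1 (gpath H t) p1 p2), (fun t => ax2 (gpath H t) p1 p2),
  (fun t => ay1 (gpath H t) p3 p4 p5), (fun t => ay2 (gpath H t) p3 p4 p5),
  (fun t => ay3 (gpath H t) p3 p4 p5), lam, mu.
split; first by split; rewrite /ax1 /ax2 /ay1 /ay2 /ay3 /gpath /=; cont.
split => //; split => //.
split; first by split; rewrite /ax1 /ax2 /ay1 /ay2 /ay3 /gpath /=; ring.
split.
  by case: H hd ht e1 e2 e3 e4 e5 => a b c d /= _ _ <- <- <- <- <-;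
    split; rewrite /ax1 /ax2 /ay1 /ay2 /ay3 /gpath /=; ring.
move=> t ht01.
have hdt := det_gt _ _ hd ht ht01.
have hdt2 : 0 < det2 (gpath H t) ^+ 2 by rewrite exprn_gt0.
apply: plus_of.
  by rewrite Delta_ay mulr_gt0.
by rewrite Res_a mulf_neq0 // gt_eqF.
Qed.

End C.
Arguments mk2 {R}.
Arguments ax1 {R}. Arguments ax2 {R}. Arguments ay1 {R}. Arguments ay2 {R}. Arguments ay3 {R}.
Arguments det2 {R}. Arguments tr2 {R}. Arguments mm {R}. Arguments adj2 {R}. Arguments sc2 {R}.
Arguments gpath {R}.


Section P.
Variable R : realType.

Definition Gm (x1 x2 m1 m2 n1 n2 : R) : M2 R :=
  mk2 (- (x2 * m1 - x1 * m2) * n2) ((x2 * m1 - x1 * m2) * n1)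
      (- (x2 * n1 - x1 * n2) * m2) ((x2 * n1 - x1 * n2) * m1).

Section G.
Variables x1 x2 m1 m2 n1 n2 : R.
Let RR := Res x1 x2 (m1 * n1) (m1 * n2 + m2 * n1) (m2 * n2).
Let d := m1 * n2 - m2 * n1.
Let G := Gm x1 x2 m1 m2 n1 n2.
Lemma G_x1 : ax1 G x1 x2 = RR. Proof. rewrite /ax1 /G /RR /Res /=; ring. Qed.
Lemma G_x2 : ax2 G x1 x2 = RR. Proof. rewrite /ax2 /G /RR /Res /=; ring. Qed.
Lemma G_y1 : ay1 G (m1 * n1) (m1 * n2 + m2 * n1) (m2 * n2) = 0.
Proof. rewrite /ay1 /G /=; ring. Qed.
Lemma G_y2 : ay2 G (m1 * n1) (m1 * n2 + m2 * n1) (m2 * n2) = - RR * d ^+ 2.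
Proof. rewrite /ay2 /G /RR /d /Res /=; ring. Qed.
Lemma G_y3 : ay3 G (m1 * n1) (m1 * n2 + m2 * n1) (m2 * n2) = 0.
Proof. rewrite /ay3 /G /=; ring. Qed.
Lemma G_det : det2 G = - RR * d.
Proof. rewrite /det2 /G /RR /d /Res /=; ring. Qed.
End G.

Section Gen.
Implicit Types (g h : M2 R).
Lemma ax1_mm g h a b : ax1 (mm g h) a b = ax1 g (ax1 h a b) (ax2 h a b).
Proof. by case: g; case: h => *; rewrite /ax1 /ax2 /mm /=; ring. Qed.
Lemma ax2_mm g h a b : ax2 (mm g h) a b = ax2 g (ax1 h a b) (ax2 h a b).
Proof. by case: g; case: h => *; rewrite /ax1 /ax2 /mm /=; ring. Qed.
Lemma ay1_mm g h a b c : ay1 (mm g h) a b c = ay1 g (ay1 h a b c) (ay2 h a b c) (ay3 h a b c).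
Proof. by case: g; case: h => *; rewrite /ay1 /ay2 /ay3 /mm /=; ring. Qed.
Lemma ay2_mm g h a b c : ay2 (mm g h) a b c = ay2 g (ay1 h a b c) (ay2 h a b c) (ay3 h a b c).
Proof. by case: g; case: h => *; rewrite /ay1 /ay2 /ay3 /mm /=; ring. Qed.
Lemma ay3_mm g h a b c : ay3 (mm g h) a b c = ay3 g (ay1 h a b c) (ay2 h a b c) (ay3 h a b c).
Proof. by case: g; case: h => *; rewrite /ay1 /ay2 /ay3 /mm /=; ring. Qed.
Lemma ax1_adj g a b : ax1 (adj2 g) (ax1 g a b) (ax2 g a b) = det2 g * a.
Proof. by case: g => *; rewrite /ax1 /ax2 /adj2 /det2 /=; ring. Qed.
Lemma ax2_adj g a b : ax2 (adj2 g) (ax1 g a b) (ax2 g a b) = det2 g * b.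
Proof. by case: g => *; rewrite /ax1 /ax2 /adj2 /det2 /=; ring. Qed.
Lemma ay1_adj g a b c : ay1 (adj2 g) (ay1 g a b c) (ay2 g a b c) (ay3 g a b c) = det2 g ^+ 2 * a.
Proof. by case: g => *; rewrite /ay1 /ay2 /ay3 /adj2 /det2 /=; ring. Qed.
Lemma ay2_adj g a b c : ay2 (adj2 g) (ay1 g a b c) (ay2 g a b c) (ay3 g a b c) = det2 g ^+ 2 * b.
Proof. by case: g => *; rewrite /ay1 /ay2 /ay3 /adj2 /det2 /=; ring. Qed.
Lemma ay3_adj g a b c : ay3 (adj2 g) (ay1 g a b c) (ay2 g a b c) (ay3 g a b c) = det2 g ^+ 2 * c.
Proof. by case: g => *; rewrite /ay1 /ay2 /ay3 /adj2 /det2 /=; ring. Qed.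
Lemma ax1_sc s g a b : ax1 (sc2 s g) a b = s * ax1 g a b.
Proof. by case: g => *; rewrite /ax1 /sc2 /=; ring. Qed.
Lemma ax2_sc s g a b : ax2 (sc2 s g) a b = s * ax2 g a b.
Proof. by case: g => *; rewrite /ax2 /sc2 /=; ring. Qed.
Lemma ay1_sc s g a b c : ay1 (sc2 s g) a b c = s ^+ 2 * ay1 g a b c.
Proof. by case: g => *; rewrite /ay1 /sc2 /=; ring. Qed.
Lemma ay2_sc s g a b c : ay2 (sc2 s g) a b c = s ^+ 2 * ay2 g a b c.
Proof. by case: g => *; rewrite /ay2 /sc2 /=; ring. Qed.
Lemma ay3_sc s g a b c : ay3 (sc2 s g) a b c = s ^+ 2 * ay3 g a b c.
Proof. by case: g => *; rewrite /ay3 /sc2 /=; ring. Qed.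
Lemma ax1_lin g c : ax1 g c c = c * ax1 g 1 1.
Proof. by case: g => *; rewrite /ax1 /=; ring. Qed.
Lemma ax2_lin g c : ax2 g c c = c * ax2 g 1 1.
Proof. by case: g => *; rewrite /ax2 /=; ring. Qed.
Lemma ay1_lin g c : ay1 g 0 c 0 = c * ay1 g 0 1 0.
Proof. by case: g => *; rewrite /ay1 /=; ring. Qed.
Lemma ay2_lin g c : ay2 g 0 c 0 = c * ay2 g 0 1 0.
Proof. by case: g => *; rewrite /ay2 /=; ring. Qed.
Lemma ay3_lin g c : ay3 g 0 c 0 = c * ay3 g 0 1 0.
Proof. by case: g => *; rewrite /ay3 /=; ring. Qed.
Lemma det_mm g h : det2 (mm g h) = det2 g * det2 h.
Proof. by case: g; case: h => *; rewrite /det2 /mm /=; ring. Qed.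
Lemma det_adj g : det2 (adj2 g) = det2 g.
Proof. by case: g => *; rewrite /det2 /adj2 /=; ring. Qed.
Lemma det_sc s g : det2 (sc2 s g) = s ^+ 2 * det2 g.
Proof. by case: g => *; rewrite /det2 /sc2 /=; ring. Qed.
Lemma tr_sc s g : tr2 (sc2 s g) = s * tr2 g.
Proof. by case: g => *; rewrite /tr2 /sc2 /=; ring. Qed.
End Gen.

Lemma norm_plus (x1 x2 y1 y2 y3 : R) : 0 < Delta y1 y2 y3 -> Res x1 x2 y1 y2 y3 != 0 ->
  exists m1 m2 n1 n2 : R, [/\ y1 = m1 * n1, y2 = m1 * n2 + m2 * n1, y3 = m2 * n2 &
    Res x1 x2 y1 y2 y3 * (m1 * n2 - m2 * n1) < 0].
Proof.
move=> hD hR.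
have [m1 [m2 [n1 [n2 [e1 e2 e3]]]]] := fact_plus _ _ _ _ hD.
have hd : m1 * n2 - m2 * n1 != 0.
  apply/eqP => h; move: hD; rewrite e1 e2 e3 /Delta.
  have -> : (m1 * n2 + m2 * n1) ^+ 2 - 4 * (m1 * n1) * (m2 * n2) = (m1 * n2 - m2 * n1) ^+ 2 by ring.
  by rewrite h expr0n /= ltxx.
have hRd : Res x1 x2 y1 y2 y3 * (m1 * n2 - m2 * n1) != 0 by rewrite mulf_neq0.
case: (ltgtP (Res x1 x2 y1 y2 y3 * (m1 * n2 - m2 * n1)) 0) hRd => // h _.
  by exists m1, m2, n1, n2; split.
exists n1, n2, m1, m2; split.
- by rewrite e1 mulrC.
- by rewrite e2 addrC [m1 * n2]mulrC [m2 * n1]mulrC.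
- by rewrite e3 mulrC.
- have -> : n1 * m2 - n2 * m1 = - (m1 * n2 - m2 * n1) by ring.
  by rewrite mulrN oppr_lt0.
Qed.

Lemma sign_exists0 (a : R) : exists s : R, s ^+ 2 = 1 /\ 0 <= s * a.
Proof.
case: (leP 0 a) => h.
  by exists 1; split; [rewrite expr1n | rewrite mul1r].
by exists (-1); split; [rewrite sqrrN expr1n | rewrite mulN1r oppr_ge0 ltW].
Qed.

Lemma path_plus p q : in5 (@inMplus R) p -> in5 (@inMplus R) q -> path_in (@inMplus R) p q.
Proof.
case: p => [[[[p1 p2] p3] p4] p5]; case: q => [[[[q1 q2] q3] q4] q5] /= hp hq.
have hp' := hp.
case: hp => _ [hpD hpR]; case: hq => _ [hqD hqR].
have [a1 [a2 [b1 [b2 [ep3 ep4 ep5 hpn]]]]] := norm_plus _ _ _ _ _ hpD hpR.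
have [c1 [c2 [f1 [f2 [eq3 eq4 eq5 hqn]]]]] := norm_plus _ _ _ _ _ hqD hqR.
subst p3 p4 p5 q3 q4 q5.
set Rp := Res p1 p2 _ _ _ in hpR hpn *.
set Rq := Res q1 q2 _ _ _ in hqR hqn *.
set dp := a1 * b2 - a2 * b1 in hpn *.
set dq := c1 * f2 - c2 * f1 in hqn *.
have hRq : Rq != 0 by [].
have hdq : dq != 0 by apply/eqP => e; move: hqn; rewrite e mulr0 ltxx.
have hdp : dp != 0 by apply/eqP => e; move: hpn; rewrite e mulr0 ltxx.
have dGp : det2 (Gm p1 p2 a1 a2 b1 b2) = - Rp * dp by rewrite G_det.
have dGq : det2 (Gm q1 q2 c1 c2 f1 f2) = - Rq * dq by rewrite G_det.
set Gp := Gm p1 p2 a1 a2 b1 b2 in dGp *.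
set Gq := Gm q1 q2 c1 c2 f1 f2 in dGq *.
have hGq0 : det2 Gq != 0 by rewrite dGq mulNr oppr_eq0 mulf_neq0.
pose H0 := mm (adj2 Gq) Gp.
have hdH0 : 0 < det2 H0 by rewrite /H0 det_mm det_adj dGp dGq; nra.
have [s [hs2 hst]] := sign_exists0 (tr2 H0).
pose lam := s * Rp * det2 Gq / Rq.
pose mu := Rp * dp ^+ 2 * det2 Gq ^+ 2 / (Rq * dq ^+ 2).
have hs0 : s != 0 by apply/eqP => e; move: hs2; rewrite e expr0n /= => /eqP; rewrite eq_sym oner_eq0.
apply: (@path_act R (sc2 s H0) (p1, p2, a1 * b1, a1 * b2 + a2 * b1, a2 * b2) (q1, q2, c1 * f1, c1 * f2 + c2 * f1, c2 * f2) lam mu hp').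
- by rewrite det_sc hs2 mul1r.
- by rewrite tr_sc.
- by rewrite /lam !mulf_neq0 // invr_eq0.
- by rewrite /mu !mulf_neq0 ?expf_neq0 // invr_eq0 mulf_neq0 ?expf_neq0.
have X1 : Rq * ax1 (adj2 Gq) 1 1 = det2 Gq * q1.
  by rewrite -ax1_lin -(ax1_adj Gq q1 q2) /Gq G_x1 G_x2.
have X2 : Rq * ax2 (adj2 Gq) 1 1 = det2 Gq * q2.
  by rewrite -ax2_lin -(ax2_adj Gq q1 q2) /Gq G_x1 G_x2.
have Y1 : - (Rq * dq ^+ 2) * ay1 (adj2 Gq) 0 1 0 = det2 Gq ^+ 2 * (c1 * f1).
  rewrite -ay1_lin -(ay1_adj Gq (c1 * f1) (c1 * f2 + c2 * f1) (c2 * f2)) /Gq G_y1 G_y3 G_y2.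
  by rewrite mulNr.
have Y2 : - (Rq * dq ^+ 2) * ay2 (adj2 Gq) 0 1 0 = det2 Gq ^+ 2 * (c1 * f2 + c2 * f1).
  rewrite -ay2_lin -(ay2_adj Gq (c1 * f1) (c1 * f2 + c2 * f1) (c2 * f2)) /Gq G_y1 G_y3 G_y2.
  by rewrite mulNr.
have Y3 : - (Rq * dq ^+ 2) * ay3 (adj2 Gq) 0 1 0 = det2 Gq ^+ 2 * (c2 * f2).
  rewrite -ay3_lin -(ay3_adj Gq (c1 * f1) (c1 * f2 + c2 * f1) (c2 * f2)) /Gq G_y1 G_y3 G_y2.
  by rewrite mulNr.
have hq2 : Rq * dq ^+ 2 != 0 by rewrite mulf_neq0 ?expf_neq0.
split.
- rewrite ax1_sc /H0 ax1_mm /Gp G_x1 G_x2 ax1_lin -/Rp.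
  have -> : ax1 (adj2 Gq) 1 1 = det2 Gq * q1 / Rq by rewrite -X1; field; rewrite ?hdq ?hRq ?hdp ?hGq0 ?hs0.
  by rewrite /lam; field; rewrite ?hdq ?hRq ?hdp ?hGq0 ?hs0.
- rewrite ax2_sc /H0 ax2_mm /Gp G_x1 G_x2 ax2_lin -/Rp.
  have -> : ax2 (adj2 Gq) 1 1 = det2 Gq * q2 / Rq by rewrite -X2; field; rewrite ?hdq ?hRq ?hdp ?hGq0 ?hs0.
  by rewrite /lam; field; rewrite ?hdq ?hRq ?hdp ?hGq0 ?hs0.
- rewrite ay1_sc hs2 mul1r /H0 ay1_mm /Gp G_y1 G_y3 G_y2 ay1_lin -/Rp -/dp.
  have -> : ay1 (adj2 Gq) 0 1 0 = - (det2 Gq ^+ 2 * (c1 * f1)) / (Rq * dq ^+ 2).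
    by rewrite -Y1; field; rewrite ?hdq ?hRq ?hdp ?hGq0 ?hs0.
  by rewrite /mu; field; rewrite ?hdq ?hRq ?hdp ?hGq0 ?hs0.
- rewrite ay2_sc hs2 mul1r /H0 ay2_mm /Gp G_y1 G_y3 G_y2 ay2_lin -/Rp -/dp.
  have -> : ay2 (adj2 Gq) 0 1 0 = - (det2 Gq ^+ 2 * (c1 * f2 + c2 * f1)) / (Rq * dq ^+ 2).
    by rewrite -Y2; field; rewrite ?hdq ?hRq ?hdp ?hGq0 ?hs0.
  by rewrite /mu; field; rewrite ?hdq ?hRq ?hdp ?hGq0 ?hs0.
- rewrite ay3_sc hs2 mul1r /H0 ay3_mm /Gp G_y1 G_y3 G_y2 ay3_lin -/Rp -/dp.
  have -> : ay3 (adj2 Gq) 0 1 0 = - (det2 Gq ^+ 2 * (c2 * f2)) / (Rq * dq ^+ 2).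
    by rewrite -Y3; field; rewrite ?hdq ?hRq ?hdp ?hGq0 ?hs0.
  by rewrite /mu; field; rewrite ?hdq ?hRq ?hdp ?hGq0 ?hs0.
Qed.

End P.


Section F.
Variable R : realType.

Lemma no_path p q : in5 (@inMplus R) p -> in5 (@inMminus R) q -> ~ path_in (@inU R) p q.
Proof.
case: p => [[[[p1 p2] p3] p4] p5]; case: q => [[[[q1 q2] q3] q4] q5] /=.
move=> [_ [hpD _]] [_ [hqD _]].
move=> [g1 [g2 [g3 [g4 [g5 [lam [mu [[c1 c2 c3 c4 c5] [hl [hm [[z1 z2 z3 z4 z5] [[o1 o2 o3 o4 o5] hU]]]]]]]]]]]].
pose f := fun t => Delta (g3 t) (g4 t) (g5 t).
have cf : continuous f.
  rewrite /f /Delta.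
  apply: cB; first exact: cX.
  by apply: cM; [apply: cM; [exact: cC|] |].
have f0 : 0 < f 0 by rewrite /f z3 z4 z5.
have f1 : f 1 < 0.
  rewrite /f o3 o4 o5 delta_scale.
  have : 0 < mu ^+ 2 by rewrite lt0r sqrf_eq0 hm sqr_ge0.
  nra.
have [c hc fc] : exists2 c, c \in `[0, 1] & f c = 0.
  apply: IVT; first exact: ler01.
    exact: continuous_subspaceT.
  apply/andP; split.
    by rewrite ge_min; apply/orP; right; exact: ltW.
  by rewrite le_max; apply/orP; left; exact: ltW.
have hc' : 0 <= c <= 1 by move: hc; rewrite in_itv.
have [hrep [hS1 _]] := hU c hc'.
by apply: hS1; split.
Qed.

Lemma partA : two_components (@inU R) (@inMplus R) (@inMminus R).
Proof.
split.
  case => [[[[x1 x2] y1] y2] y3] /=; split.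
    move=> [hrep [hS1 hS2]].
    have hR : Res x1 x2 y1 y2 y3 != 0 by apply/eqP => e; apply: hS2.
    have hD : Delta y1 y2 y3 != 0 by apply/eqP => e; apply: hS1.
    case: (ltgtP (Delta y1 y2 y3) 0) hD => // h _.
      by right; split.
    by left; split.
  case => [[hrep [hD hR]]|[hrep [hD hR]]]; (split; [done | split]).
  - by case => _ e; move: hD; rewrite e ltxx.
  - by case => _ e; move: hR; rewrite e eqxx.
  - by case => _ e; move: hD; rewrite e ltxx.
  - by case => _ e; move: hR; rewrite e eqxx.
split.
  case => [[[[x1 x2] y1] y2] y3] /= [[_ [h1 _]] [_ [h2 _]]].
  by move: (lt_trans h2 h1); rewrite ltxx.
split.
  exists (1, 1, 0, 1, 0) => /=; apply: plus_of.
    by rewrite /Delta; lra.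
  by rewrite /Res; apply/eqP; lra.
split.
  exists (1, 0, 1, 0, 1) => /=; apply: minus_of.
    by rewrite /Delta; lra.
  by rewrite /Res; apply/eqP; lra.
split; first exact: path_plus.
split; first exact: path_minus.
exact: no_path.
Qed.

End F.

Theorem theorem3p12 (R : realType) :
  two_components (@inU R) (@inMplus R) (@inMminus R) /\
  (forall x1 x2 y1 y2 y3 : R,
    (inMplus x1 x2 y1 y2 y3 -> lie_iso (gxy x1 x2 y1 y2 y3) (@so3_so3 R)) /\
    (inMminus x1 x2 y1 y2 y3 -> lie_iso (gxy x1 x2 y1 y2 y3) (@so3C R)) /\
    (inS1 x1 x2 y1 y2 y3 -> ~ inC x1 x2 y1 y2 y3 ->
       lie_iso (gxy x1 x2 y1 y2 y3) (@so3_ltimes_R3 R)) /\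
    (inS2 x1 x2 y1 y2 y3 -> ~ inC x1 x2 y1 y2 y3 ->
       lie_iso (gxy x1 x2 y1 y2 y3) (@so3_oplus_R3 R)) /\
    (inC x1 x2 y1 y2 y3 -> lie_iso (gxy x1 x2 y1 y2 y3) (@nil_alg R))).
Proof.
split; first exact: partA.
by move=> x1 x2 y1 y2 y3; exact: partB.
Qed.
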